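(* The multiplicative semigroup $(\mathbb N,\cdot)$ of positive integers is left and right fairly amenable.
   Context: For a semigroup $U$, $s\in U$, $A\subseteq U$: $s$ acts injectively on the left (right) of $A$ if $a\mapsto sa$ ($a\mapsto as$) is injective on $A$. A finitely-additive probability measure on $U$ is $\mu:\mathcal P(U)\to[0,1]$ with $\mu(U)=1$, additive on disjoint sets; it is left fairly invariant if $\mu(sA)=\mu(A)$ whenever $s$ acts injectively on the left of $A$ (right fairly invariant analogously with $As$). $U$ is left (right) fairly amenable if such a measure exists. *)

(* Defs.v *)
From Stdlib Require Import Reals PArith.
Open Scope R_scope.

Definition set_full {U : Type} : U -> Prop := fun _ => True.
Definition set_union {U : Type} (A B : U -> Prop) : U -> Prop :=
  fun x => A x \/ B x.
Definition set_disjoint {U : Type} (A B : U -> Prop) : Prop :=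
  forall x, A x -> B x -> False.

Definition left_translate {U : Type} (op : U -> U -> U) (s : U) (A : U -> Prop)
  : U -> Prop := fun x => exists a, A a /\ x = op s a.
Definition right_translate {U : Type} (op : U -> U -> U) (A : U -> Prop) (s : U)
  : U -> Prop := fun x => exists a, A a /\ x = op a s.

Definition acts_inj_left {U : Type} (op : U -> U -> U) (s : U) (A : U -> Prop) :=
  forall a b, A a -> A b -> op s a = op s b -> a = b.
Definition acts_inj_right {U : Type} (op : U -> U -> U) (s : U) (A : U -> Prop) :=
  forall a b, A a -> A b -> op a s = op b s -> a = b.

Definition fa_prob_measure {U : Type} (mu : (U -> Prop) -> R) : Prop :=
  (forall A, 0 <= mu A <= 1) /\
  mu set_full = 1 /\
  (forall A B, set_disjoint A B -> mu (set_union A B) = mu A + mu B).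

Definition left_fairly_invariant {U : Type} (op : U -> U -> U)
  (mu : (U -> Prop) -> R) : Prop :=
  forall s A, acts_inj_left op s A -> mu (left_translate op s A) = mu A.
Definition right_fairly_invariant {U : Type} (op : U -> U -> U)
  (mu : (U -> Prop) -> R) : Prop :=
  forall s A, acts_inj_right op s A -> mu (right_translate op A s) = mu A.

Definition left_fairly_amenable {U : Type} (op : U -> U -> U) : Prop :=
  exists mu, fa_prob_measure mu /\ left_fairly_invariant op mu.
Definition right_fairly_amenable {U : Type} (op : U -> U -> U) : Prop :=
  exists mu, fa_prob_measure mu /\ right_fairly_invariant op mu.

(* Main.v *)
Require Import Defs.
From Stdlib Require Import Reals PArith.
From Stdlib Require Import Reals PArith Lra Lia List ClassicalEpsilon.
Open Scope R_scope.

Fixpoint pw (t : positive) (a : nat) : positive :=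
  match a with O => 1%positive | S a => (t * pw t a)%positive end.

Definition avg (n : nat) (t : positive) (g : positive -> R) (x : positive) : R :=
  sum_f_R0 (fun a => g (pw t a * x)%positive) n / INR (S n).

Fixpoint comp (n : nat) (l : list positive) (g : positive -> R) : positive -> R :=
  match l with nil => g | i :: l => avg n i (comp n l g) end.

Lemma sum_ext (f g : nat -> R) n : (forall a, f a = g a) ->
  sum_f_R0 f n = sum_f_R0 g n.
Proof. intro H; induction n; simpl; rewrite ?IHn, ?H; reflexivity. Qed.

Lemma avg_ext n t g h x : (forall y, g y = h y) -> avg n t g x = avg n t h x.
Proof. intro H; unfold avg; rewrite (sum_ext _ (fun a => h (pw t a * x)%positive)); auto. Qed.

Lemma comp_ext n l g h : (forall y, g y = h y) -> forall x, comp n l g x = comp n l h x.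
Proof.
  intro H; induction l; simpl; intro x; auto.
  apply avg_ext; auto.
Qed.

Lemma sum_swap (f : nat -> nat -> R) n m :
  sum_f_R0 (fun a => sum_f_R0 (fun b => f a b) m) n =
  sum_f_R0 (fun b => sum_f_R0 (fun a => f a b) n) m.
Proof.
  induction n; simpl.
  - apply sum_ext; reflexivity.
  - rewrite IHn, <- plus_sum. apply sum_ext; reflexivity.
Qed.

Lemma sum_div (f : nat -> R) n c :
  sum_f_R0 (fun a => f a / c) n = sum_f_R0 f n / c.
Proof. unfold Rdiv; rewrite <- scal_sum. ring. Qed.

Lemma avg_comm n i j g x : avg n i (avg n j g) x = avg n j (avg n i g) x.
Proof.
  unfold avg. f_equal. rewrite !sum_div. f_equal.
  rewrite sum_swap. apply sum_ext; intro b. apply sum_ext; intro a.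
  f_equal. rewrite !Pos.mul_assoc, (Pos.mul_comm (pw j b)). reflexivity.
Qed.

Lemma comp_avg n l i g x : comp n l (avg n i g) x = avg n i (comp n l g) x.
Proof.
  revert x; induction l as [|j l IH]; intro x; simpl; auto.
  rewrite (avg_ext _ _ _ (fun y => avg n i (comp n l g) y)) by auto.
  apply avg_comm.
Qed.

Definition T (t : positive) (g : positive -> R) (x : positive) := g (t * x)%positive.

Lemma comp_T n l t g x : comp n l (T t g) x = comp n l g (t * x)%positive.
Proof.
  revert x; induction l as [|j l IH]; intro x; simpl; auto.
  rewrite (avg_ext _ _ _ (fun y => comp n l g (t * y)%positive)) by auto.
  unfold avg. f_equal. apply sum_ext; intro a. f_equal.
  rewrite !Pos.mul_assoc, (Pos.mul_comm t). reflexivity.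
Qed.

Lemma extract n t l : In t l -> exists l', forall g x,
  comp n l g x = avg n t (comp n l' g) x.
Proof.
  induction l as [|i l IH]; simpl; intros H; [contradiction|].
  destruct H as [<-|H].
  - exists l; reflexivity.
  - destruct (IH H) as [l' Hl']. exists (i :: l'). intros g x. simpl.
    rewrite (avg_ext _ _ _ (fun y => avg n t (comp n l' g) y)) by auto.
    apply avg_comm.
Qed.

Lemma sum_bound (f : nat -> R) n : (forall a, 0 <= f a <= 1) ->
  0 <= sum_f_R0 f n <= INR (S n).
Proof.
  intro H; induction n; simpl.
  - specialize (H 0%nat); lra.
  - specialize (H (S n)). destruct n; simpl in *; lra.
Qed.

Lemma avg_bound n t g x : (forall y, 0 <= g y <= 1) -> 0 <= avg n t g x <= 1.
Proof.
  intro H. unfold avg.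
  destruct (sum_bound (fun a => g (pw t a * x)%positive) n) as [h1 h2]; auto.
  assert (0 < INR (S n)) by (apply lt_0_INR; lia).
  split.
  - apply Rmult_le_pos; auto. left; apply Rinv_0_lt_compat; auto.
  - apply (Rmult_le_reg_r (INR (S n))); auto. unfold Rdiv.
    rewrite Rmult_assoc, Rinv_l by lra. lra.
Qed.

Lemma comp_bound n l g : (forall y, 0 <= g y <= 1) -> forall x, 0 <= comp n l g x <= 1.
Proof. intro H; induction l; simpl; intro x; auto. apply avg_bound; auto. Qed.

Lemma comp_add n l g h x :
  comp n l (fun y => g y + h y) x = comp n l g x + comp n l h x.
Proof.
  revert x; induction l as [|j l IH]; intro x; simpl; auto.
  rewrite (avg_ext _ _ _ (fun y => comp n l g y + comp n l h y)) by auto.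
  unfold avg. rewrite plus_sum. lra.
Qed.

Lemma comp_one n l x : comp n l (fun _ => 1) x = 1.
Proof.
  revert x; induction l as [|j l IH]; intro x; simpl; auto.
  rewrite (avg_ext _ _ _ (fun _ => 1)) by auto.
  unfold avg. rewrite sum_cte.
  assert (0 < INR (S n)) by (apply lt_0_INR; lia). field. lra.
Qed.

Lemma tele (f : nat -> R) n : sum_f_R0 (fun a => f (S a) - f a) n = f (S n) - f O.
Proof. induction n; simpl; [|rewrite IHn]; ring. Qed.

Lemma avg_tele n t H x : (forall y, 0 <= H y <= 1) ->
  Rabs (avg n t (T t H) x - avg n t H x) <= / INR (S n).
Proof.
  intro HB. unfold avg, T.
  assert (0 < INR (S n)) by (apply lt_0_INR; lia).
  replace (sum_f_R0 (fun a => H (t * (pw t a * x))%positive) n / INR (S n) -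
    sum_f_R0 (fun a => H (pw t a * x)%positive) n / INR (S n)) with
    ((H (pw t (S n) * x)%positive - H (pw t 0 * x)%positive) / INR (S n)).
  2:{ rewrite <- (tele (fun a => H (pw t a * x)%positive)).
      rewrite minus_sum. unfold Rdiv. rewrite <- Rmult_minus_distr_r. f_equal.
      rewrite (sum_ext _ (fun a => H (t * (pw t a * x))%positive)); [reflexivity|].
      intro a. simpl. rewrite Pos.mul_assoc. reflexivity. }
  unfold Rdiv. rewrite Rabs_mult, (Rabs_right (/ _)).
  2:{ left; apply Rinv_0_lt_compat; auto. }
  rewrite <- (Rmult_1_l (/ INR (S n))) at 2.
  apply Rmult_le_compat_r. left; apply Rinv_0_lt_compat; auto.
  pose proof (HB (pw t (S n) * x)%positive). pose proof (HB (pw t 0 * x)%positive).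
  apply Rabs_le; lra.
Qed.

Definition ind (A : positive -> Prop) (x : positive) : R :=
  if excluded_middle_informative (A x) then 1 else 0.

Lemma ind_bound A x : 0 <= ind A x <= 1.
Proof. unfold ind; destruct excluded_middle_informative; lra. Qed.

Fixpoint plist (k : nat) : list positive :=
  match k with O => nil | S k => Pos.of_succ_nat k :: plist k end.

Lemma plist_in t n : (Pos.to_nat t <= n)%nat -> In t (plist n).
Proof.
  induction n; simpl; intro H; [lia|].
  destruct (Nat.eq_dec (Pos.to_nat t) (S n)) as [e|e].
  - left. apply Pos2Nat.inj. rewrite SuccNat2Pos.id_succ. auto.
  - right; apply IHn; lia.
Qed.

Definition mseq (A : positive -> Prop) (n : nat) : R := comp n (plist n) (ind A) 1%positive.

Lemma mseq_bound A n : 0 <= mseq A n <= 1.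
Proof. apply comp_bound, ind_bound. Qed.

Lemma mseq_full n : mseq (fun _ => True) n = 1.
Proof.
  unfold mseq. rewrite (comp_ext _ _ _ (fun _ => 1)). apply comp_one.
  intro; unfold ind; destruct excluded_middle_informative; tauto.
Qed.

Lemma mseq_add A B n : (forall x, A x -> B x -> False) ->
  mseq (fun x => A x \/ B x) n = mseq A n + mseq B n.
Proof.
  intro D. unfold mseq. rewrite <- comp_add. apply comp_ext. intro y.
  unfold ind; repeat destruct excluded_middle_informative; firstorder; lra.
Qed.

Lemma mseq_inv t A n : (Pos.to_nat t <= n)%nat ->
  Rabs (mseq A n - mseq (fun x => exists a, A a /\ x = (t * a)%positive) n) <= / INR (S n).
Proof.
  intro Ht. set (B := fun x => exists a, A a /\ x = (t * a)%positive).
  destruct (extract n t (plist n) (plist_in _ _ Ht)) as [l' Hl'].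
  unfold mseq.
  rewrite (comp_ext _ _ (ind A) (T t (ind B))).
  2:{ intro y. unfold T, ind, B.
      repeat destruct excluded_middle_informative; auto.
      - exfalso; eauto.
      - exfalso. destruct e as [a [Ha Hy]]. apply Pos.mul_cancel_l in Hy. subst; tauto. }
  rewrite !Hl'.
  rewrite (avg_ext _ _ _ (T t (comp n l' (ind B)))).
  2:{ intro y. apply comp_T. }
  apply avg_tele. apply comp_bound, ind_bound.
Qed.
From Stdlib Require Import FunctionalExtensionality.

Lemma mseq_ext A B n : (forall x, A x <-> B x) -> mseq A n = mseq B n.
Proof.
  intro H. unfold mseq. apply comp_ext. intro y. unfold ind.
  repeat destruct excluded_middle_informative; firstorder.
Qed.

Definition ultraP (U : (nat -> Prop) -> Prop) : Prop :=
  (forall A B : nat -> Prop, (forall n, A n -> B n) -> U A -> U B) /\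
  (forall A B : nat -> Prop, U A -> U B -> U (fun n => A n /\ B n)) /\
  ~ U (fun _ => False) /\
  (forall A : nat -> Prop, U A \/ U (fun n => ~ A n)) /\
  (forall N : nat, U (fun n => Peano.le N n)).

Definition E (U : (nat -> Prop) -> Prop) (x : nat -> R) (r : R) : Prop :=
  r = 0 \/ (r <= 1 /\ U (fun n => r <= x n)).

Lemma E_bound U x : bound (E U x).
Proof. exists 1. intros r [->|[h _]]; lra. Qed.

Lemma E_ne U x : exists r, E U x r.
Proof. exists 0; left; reflexivity. Qed.

Definition L U x : R := proj1_sig (completeness (E U x) (E_bound U x) (E_ne U x)).

Lemma L_lub U x : is_lub (E U x) (L U x).
Proof. unfold L. destruct completeness; auto. Qed.

Lemma L_bound U x : 0 <= L U x <= 1.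
Proof.
  destruct (L_lub U x) as [h1 h2]. split.
  - apply h1. left; reflexivity.
  - apply h2. intros r [->|[h _]]; lra.
Qed.

Lemma U_ex U : ultraP U -> forall A, U A -> exists n, A n.
Proof.
  intros (HS & HI & HF & HC & HN) A HA.
  destruct (classic (exists n, A n)) as [h|h]; auto.
  exfalso; apply HF. apply (HS A); auto. intros n An; apply h; eauto.
Qed.

Lemma L_near U x : ultraP U -> (forall n, 0 <= x n <= 1) ->
  forall e, 0 < e -> U (fun n => Rabs (x n - L U x) < e).
Proof.
  intros HU Hx e He. pose proof HU as (HS & HI & HF & HC & HN).
  destruct (L_lub U x) as [h1 h2]. set (l := L U x) in *.
  assert (Ha : U (fun n => l - e < x n)).
  { destruct (Rlt_le_dec (l - e) 0) as [hl|hl].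
    - apply (HS _ _ (fun n _ => Rlt_le_trans _ _ _ hl (proj1 (Hx n))) (HN 0%nat)).
    - destruct (HC (fun n => l - e < x n)) as [h|h]; auto. exfalso.
      assert (l <= l - e); [|lra]. apply h2. intros r [->|[hr1 hr2]]; auto.
      destruct (U_ex U HU _ (HI _ _ hr2 h)) as [n [hn1 hn2]]. lra. }
  assert (Hb : U (fun n => x n < l + e)).
  { destruct (HC (fun n => x n < l + e)) as [h|h]; auto. exfalso.
    destruct (Rle_lt_dec (l + e) 1) as [hl|hl].
    - assert (l + e <= l); [|lra]. apply h1. right. split; auto.
      apply (HS _ _ (fun n hn => Rnot_lt_le _ _ hn) h).
    - destruct (U_ex U HU _ h) as [n hn]. specialize (Hx n). lra. }
  refine (HS _ _ _ (HI _ _ Ha Hb)); intros n hn; simpl in hn.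
  destruct hn; apply Rabs_def1; lra.
Qed.

Lemma L_char U x a : ultraP U -> (forall n, 0 <= x n <= 1) ->
  (forall e, 0 < e -> U (fun n => Rabs (x n - a) < e)) -> L U x = a.
Proof.
  intros HU Hx H. pose proof HU as (HS & HI & HF & HC & HN).
  destruct (Req_dec (L U x) a) as [h|h]; auto. exfalso.
  set (e := Rabs (L U x - a) / 2).
  assert (He : 0 < e) by (unfold e; pose proof (Rabs_pos_lt _ (Rminus_eq_contra _ _ h)); lra).
  destruct (U_ex U HU _ (HI _ _ (H e He) (L_near U x HU Hx e He))) as [n [h1 h2]].
  pose proof (Rabs_triang (L U x - x n) (x n - a)).
  replace (L U x - x n + (x n - a)) with (L U x - a) in H0 by ring.
  rewrite Rabs_minus_sym in h2. unfold e in *. lra.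
Qed.

Lemma L_add U x y z : ultraP U -> (forall n, 0 <= x n <= 1) -> (forall n, 0 <= y n <= 1) ->
  (forall n, 0 <= z n <= 1) -> (forall n, z n = x n + y n) -> L U z = L U x + L U y.
Proof.
  intros HU Hx Hy Hz Hs. pose proof HU as (HS & HI & HF & HC & HN).
  apply L_char; auto. intros e He.
  refine (HS _ _ _ (HI _ _ (L_near U x HU Hx (e/2) ltac:(lra)) (L_near U y HU Hy (e/2) ltac:(lra)))); intros n hn; simpl in hn.
  destruct hn as [h1 h2]. rewrite Hs.
  pose proof (Rabs_triang (x n - L U x) (y n - L U y)).
  replace (x n - L U x + (y n - L U y)) with (x n + y n - (L U x + L U y)) in H by ring.
  lra.
Qed.

Lemma L_one U x : ultraP U -> (forall n, x n = 1) -> L U x = 1.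
Proof.
  intros HU Hx. pose proof HU as (HS & HI & HF & HC & HN).
  apply L_char; auto. { intro n; rewrite Hx; lra. }
  intros e He. refine (HS _ _ _ (HN 0%nat)); intros n _.
  rewrite Hx, Rminus_diag, Rabs_R0; auto.
Qed.

Lemma L_eq U x y N : ultraP U -> (forall n, 0 <= x n <= 1) -> (forall n, 0 <= y n <= 1) ->
  (forall n, (N <= n)%nat -> Rabs (x n - y n) <= / INR (S n)) -> L U y = L U x.
Proof.
  intros HU Hx Hy Hxy. pose proof HU as (HS & HI & HF & HC & HN).
  apply L_char; auto. intros e He.
  destruct (archimed_cor1 (e/2) ltac:(lra)) as [M [hM1 hM2]].
  refine (HS _ _ _ (HI _ _ (HN (max N M)) (L_near U x HU Hx (e/2) ltac:(lra)))); intros n hn; simpl in hn.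
  destruct hn as [h1 h2].
  assert (h3 : Rabs (x n - y n) <= / INR (S n)) by (apply Hxy; lia).
  assert (h4 : / INR (S n) <= / INR M).
  { apply Rinv_le_contravar. apply lt_0_INR; lia. apply le_INR; lia. }
  pose proof (Rabs_triang (y n - x n) (x n - L U x)).
  replace (y n - x n + (x n - L U x)) with (y n - L U x) in H by ring.
  rewrite Rabs_minus_sym in h3. lra.
Qed.

Lemma main_of_U U : ultraP U ->
  left_fairly_amenable Pos.mul /\ right_fairly_amenable Pos.mul.
Proof.
  intro HU.
  assert (Hfa : fa_prob_measure (fun A => L U (mseq A))).
  { split; [|split].
    - intro A; apply L_bound.
    - apply L_one; auto. intro n; apply mseq_full.
    - intros A B D. apply L_add; auto; intro n; try apply mseq_bound.
      apply mseq_add; auto. }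
  assert (Hinv : forall s A, L U (mseq (left_translate Pos.mul s A)) = L U (mseq A)).
  { intros s A. apply (L_eq U _ _ (Pos.to_nat s) HU); intros; try apply mseq_bound.
    apply mseq_inv; auto. }
  split.
  - exists (fun A => L U (mseq A)); split; auto. intros s A _. apply Hinv.
  - exists (fun A => L U (mseq A)); split; auto. intros s A _.
    rewrite <- (Hinv s A). f_equal. apply functional_extensionality; intro n.
    apply mseq_ext. intro x; unfold right_translate, left_translate.
    split; intros [a [h1 h2]]; exists a; rewrite Pos.mul_comm; auto.
Qed.

From mathcomp Require Import all_boot boolp classical_sets filter.
Local Open Scope classical_set_scope.

Lemma exists_ultra : exists U, ultraP U.
Proof.
have [G [GU sub]] := ultraFilterLemma (@eventually_filter).
exists G; split; [|split; [|split; [|split]]].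
- by move=> A B AB GA; apply: filterS GA.
- move=> A B GA GB; exact: (filterI GA GB).
- move=> G0; apply: (@filter_not_empty _ G); exact: G0.
- move=> A; have [h|h] := in_ultra_setVsetC A GU; [left|right]; exact: h.
- move=> N; apply: sub; exists N => // n /= /leP //.
Qed.

Theorem mainTheorem18 :
  left_fairly_amenable Pos.mul /\ right_fairly_amenable Pos.mul.
Proof.
have [U HU] := exists_ultra.
exact: (main_of_U U HU).
Qed.
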